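(* Let $n\ge 2$ and let $p$ be a strongly 312-avoiding permutation of $\{1,\dots,n\}$ with $p_n=1$. If $p_1>p_2$, then $p$ is the decreasing permutation $n\,(n-1)\cdots 2\,1$.
   Context: Permutations are written in one-line notation $p=p_1\cdots p_n$ with $p_i=p(i)$. $p$ contains a pattern $q=q_1\cdots q_m$ if there are indices $i_1<\cdots<i_m$ with $p_{i_r}<p_{i_s}$ iff $q_r<q_s$; otherwise $p$ avoids $q$. $p^2(i)=p(p(i))$. A permutation $p$ is strongly $q$-avoiding if both $p$ and $p^2$ avoid $q$. *)

(* Defs.v *)
From mathcomp Require Import all_boot all_order all_fingroup.
Set Implicit Arguments. Unset Strict Implicit. Unset Printing Implicit Defensive.

(* Permutations of {1..n} are modelled as 'S_n, i.e. permutations of 'I_n =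
   {0..n-1}; position i+1 / value v+1 of the paper correspond to i / v here. *)

Definition contains (n m : nat) (p : 'S_n) (q : 'S_m) : Prop :=
  exists f : 'I_m -> 'I_n,
    (forall r s : 'I_m, r < s -> f r < f s) /\
    (forall r s : 'I_m, (p (f r) < p (f s)) = (q r < q s)).

Definition avoids (n m : nat) (p : 'S_n) (q : 'S_m) : Prop := ~ contains p q.

(* the pattern 312, as a permutation of 'I_3 (0-indexed: 2 0 1) *)
Definition pat312_fun (i : 'I_3) : 'I_3 :=
  match val i with 0 => inord 2 | 1 => inord 0 | _ => inord 1 end.

Lemma pat312_inj : injective pat312_fun.
Proof.
move=> [[|[|[|k]]] Hk] [[|[|[|l]]] Hl] //= H; apply/val_inj => /=;
  move: H; rewrite /pat312_fun /= => /(congr1 val); rewrite /= ?inordK //.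
Qed.

Definition pat312 : 'S_3 := perm pat312_inj.

Definition strongly_avoiding (n m : nat) (p : 'S_n) (q : 'S_m) : Prop :=
  avoids p q /\ avoids (p * p)%g q.

(* Main.v *)
Require Import Defs.
From mathcomp Require Import all_boot all_order all_fingroup zify.
Set Warnings "-notation-overridden".
Set Implicit Arguments.
Lemma mk312 N (q : 'S_N) (i j l : 'I_N) :
  i < j -> j < l -> q j < q l -> q l < q i -> contains q pat312.
Proof.
move=> hij hjl h1 h2.
exists (fun r : 'I_3 => match val r with 0 => i | 1 => j | _ => l end).
split.
- by move=> [[|[|[|r]]] Hr] [[|[|[|s]]] Hs] //= _; lia.
- move=> [[|[|[|r]]] Hr] [[|[|[|s]]] Hs] //=; rewrite /pat312 !permE /pat312_fun /= ?inordK //; lia.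
Qed.

Lemma tail_dec N (p : 'S_N) (k : 'I_N) : avoids p pat312 -> val (p k) = (N - 1) ->
  forall j l : 'I_N, k <= j -> j < l -> p l < p j.
Proof.
move=> Av Hk.
have lk : forall l : 'I_N, l != k -> p l < p k.
  move=> l lk; have := ltn_ord (p l); have : val (p l) != val (p k).
    by apply: contra lk => /eqP /val_inj /perm_inj ->.
  have Hk2 : nat_of_ord (p k) = (N - 1) := Hk; rewrite ?Hk ?Hk2 /=; lia.
move=> j l kj jl.
have ljk : l != k by apply/eqP => E; move: kj jl; rewrite E; lia.
case: (ltngtP (p l) (p j)) => // H.
- exfalso; move: kj; rewrite leq_eqVlt => /orP [/eqP E|kj].
    move: (lk l ljk); rewrite (val_inj E); lia.
  apply: Av. exact: (@mk312 _ p k j l kj jl H (lk l ljk)).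
- by move/val_inj/perm_inj: H => E; move: jl; rewrite E ltnn.
Qed.

Lemma dec_rev N (p : 'S_N) : (forall j l : 'I_N, j < l -> p l < p j) ->
  forall i : 'I_N, val (p i) = (N - 1) - i.
Proof.
move=> D.
have up : forall t (i : 'I_N), val i = t -> p i <= (N - 1) - t.
  elim=> [|t IH] i /= Hi.
    have := ltn_ord (p i); lia.
  have tN : t < N by have := ltn_ord i; lia.
  have := IH (Ordinal tN) erefl; have := D (Ordinal tN) i; rewrite /= Hi => /(_ (ltnSn _)).
  lia.
have lo : forall t (i : 'I_N), val i + t = (N - 1) -> t <= p i.
  elim=> [|t IH] i /= Hi //.
  have tN : i.+1 < N by have := ltn_ord i; lia.
  have := IH (Ordinal tN); rewrite /= => /(_ ltac:(lia)).
  have := D i (Ordinal tN) (ltnSn _); lia.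
move=> i; have h1 := up _ i erefl; have h2 := lo (N - 1 - i) i; have := ltn_ord i; simpl in *; lia.
Qed.

Lemma vE N (x : 'I_N) : \val x = nat_of_ord x. Proof. by []. Qed.
Ltac mlia := simpl in *; repeat match goal with H : is_true (?a != ?b) |- _ => move/eqP in H end; repeat match goal with H : is_true (?a != ?b) |- _ => move/eqP in H end; lia.

Theorem lemma3p5 (n : nat) (p : 'S_n.+2) :
  strongly_avoiding p pat312 ->
  val (p ord_max) = 0 ->
  val (p (inord 1)) < val (p ord0) ->
  forall i : 'I_n.+2, val (p i) = n.+1 - val i.
Proof.
move=> [Ap App] Hl H10.
change (nat_of_ord (p ord_max) = 0) in Hl.
change (is_true (nat_of_ord (p (inord 1)) < nat_of_ord (p ord0))) in H10.
set k := (p^-1)%g ord_max.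
have Hk : p k = ord_max by rewrite /k permKV.
have Hkv : val (p k) = n.+2 - 1 by rewrite Hk /=; lia.
have o1v : val (inord 1 : 'I_n.+2) = 1 by rewrite /= inordK.
case: (eqVneq (val k) 0) => [k0|k0].
  have D : forall j l : 'I_n.+2, j < l -> p l < p j.
    by move=> j l jl; apply: (@tail_dec _ p k Ap Hkv) => //; rewrite k0.
  move=> i; rewrite (@dec_rev _ p D i); simpl; lia.
exfalso.
have pinj := @perm_inj _ p.
have neqv : forall x y : 'I_n.+2, val x != val y -> val (p x) != val (p y).
  move=> x y; apply: contra => /eqP /val_inj /pinj ->; by [].
have aN : val (p ord0) < n.+1.
  have := neqv ord0 k; rewrite eq_sym k0 Hkv => /(_ isT).
  have := ltn_ord (p ord0); simpl in *; lia.
have kmax : val k != n.+1.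
  apply/negP => /eqP E; have : k = ord_max by apply: val_inj.
  move=> E2; move: Hl; rewrite -E2 Hkv /=; lia.
set m : 'I_n.+2 := inord n.
have mv : val m = n by rewrite /m /= inordK.
set pk := (p^-1)%g k.
have Hpk : p pk = k by rewrite /pk permKV.
have pmax : p ord_max = ord0 by apply: val_inj; rewrite /= Hl.
case: (ltngtP (p m) (p ord0)) => Hc.
-
  have pm1 : val (p m) = 1.
    have pm0 : val (p m) != 0.
      have := neqv m ord_max; rewrite mv /= Hl; apply; lia.
    case: (eqVneq (val (p m)) 1) => // pm1.
    set o1 := (p^-1)%g (inord 1).
    have Ho1 : val (p o1) = 1 by rewrite /o1 permKV.
    have o10 : val o1 != 0.
      apply/negP => /eqP E; have : o1 = ord0 by apply: val_inj.
      move=> E2; move: Ho1; rewrite E2; simpl in *; lia.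
    case: (ltnP (val o1) n) => o1n.
      exfalso; apply: Ap; apply: (@mk312 _ p ord0 o1 m); rewrite /= ?mv; simpl in *; lia.
    case: (eqVneq (val o1) n) => E.
      have : o1 = m by apply: val_inj; rewrite mv.
      move=> E2; move: Ho1; rewrite E2; simpl in *; lia.
    have : o1 = ord_max by apply: val_inj => /=; have := ltn_ord o1; simpl in *; lia.
    move=> E2; move: Ho1; rewrite E2; simpl in *; lia.
  have Epm : p m = inord 1 by apply: val_inj; rewrite pm1 o1v.
  have k1 : val k != 1.
    apply/negP => /eqP E; have : k = inord 1 by apply: val_inj; rewrite o1v.
    move=> E2; move: Hkv H10 aN; rewrite -E2; simpl; lia.
  have pkn : val pk < n.
    have h1 : val pk != n.+1.
      apply/negP => /eqP E; have : pk = ord_max by apply: val_inj.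
      by move=> E2; move: Hpk; rewrite E2 pmax => E3; move: k0; rewrite -E3.
    have h2 : val pk != n.
      apply/negP => /eqP E; have : pk = m by apply: val_inj; rewrite mv.
      by move=> E2; move: Hpk; rewrite E2 Epm => E3; move: k1; rewrite -E3 o1v.
    have := ltn_ord pk; simpl in *; lia.
  apply: App; apply: (@mk312 _ (p * p)%g pk m ord_max); rewrite ?permM ?Hpk ?Epm ?pmax ?Hk ?mv /=;
    simpl in *; lia.
-
  have tail : forall x : 'I_n.+2, val k <= val x -> val x <= n -> val (p ord0) < val (p x).
    move=> x kx xn; case: (eqVneq (val x) n) => E.
      have : x = m by apply: val_inj; rewrite mv.
      by move=> ->.
    have := @tail_dec _ p k Ap Hkv x m kx; rewrite mv => /(_ ltac:(simpl in *; lia)).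
    simpl in *; lia.
  case: (boolP [exists i : 'I_n.+2, (val i < val k) && (val k <= val (p i) <= n)]).
  + move=> /existsP [i /andP [ik /andP [kpi pin]]].
    have := tail _ kpi pin => T.
    apply: App; apply: (@mk312 _ (p * p)%g i k ord_max); rewrite ?permM ?Hk ?pmax //=.
    all: try (have := ltn_ord k; mlia).
  + rewrite negb_exists => /forallP NE.
  set B := [set v : 'I_n.+2 | (val k <= val v) && (val v <= n)].
  have kB : k \in B by rewrite inE leqnn /=; simpl in *; have := ltn_ord k; lia.
  have sub : (p^-1)%g @: B \subset B :\ k.
    apply/subsetP => y /imsetP [v]; rewrite inE => /andP [kv vn] ->.
    have pv : p ((p^-1)%g v) = v by rewrite permKV.
    have := NE ((p^-1)%g v); rewrite pv kv vn /= andbT -leqNgt => kpv.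
    rewrite !inE kpv /=; apply/andP; split.
      apply/negP => /eqP E; move: pv; rewrite E Hk => E2.
      by move: vn; rewrite -E2 /=; lia.
    have : val ((p^-1)%g v) != n.+1.
      apply/negP => /eqP E; have : (p^-1)%g v = ord_max by apply: val_inj.
      move=> E2; move: pv; rewrite E2 pmax => E3; move: kv; rewrite -E3; mlia.
    have := ltn_ord ((p^-1)%g v); mlia.
  have := subset_leq_card sub; rewrite card_imset; last exact: perm_inj.
  by rewrite (cardsD1 k B) kB /= add1n ltnn.
- have : m = ord0 by apply: pinj; apply: val_inj.
  move=> E; move: mv; rewrite E /= => n0.
  move: aN H10; mlia.
Qed.
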